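(* Let $K$ be a field and $|\cdot|:K\to R$ a tempered multiplicative generalized seminorm. Then $K$ has tiny balls for $|\cdot|$.
   Context: A halo is a commutative unital semiring with a partial order compatible with $+$ and $\cdot$; an aura is a halo whose semiring is a semifield; positive means $0<1$. A generalized seminorm is a map $|\cdot|:A\to R$ into a positive totally ordered aura with $|0|=0,|1|=1$, $|a+b|\le|a|+|b|$, $|ab|\le|a||b|$; multiplicative if $|ab|=|a||b|$; tempered if $R$ has tempered growth: for every non-zero $P\in\mathbb{N}[X]$ and $x\in R$, ($x^n\le P(n)$ for all $n\in\mathbb{N}$) implies $x\le1$. For $x,a\in A$ with $|a|>0$, $B(x,|a|)=\{z:|z-x|<|a|\}$. $|\cdot|$ has tiny balls if for every $a$ with $|a|>0$: there is $a'$ with $|a'|>0$ and $B(0,|a'|)+B(0,|a'|)\subset B(0,|a|)$; for every $x\in A$ there is $c$ with $|c|>0$ and $xB(0,|c|)\subset B(0,|a|)$; there is $a'$ with $|a'|>0$ and $B(0,|a'|)B(0,|a'|)\subset B(0,|a|)$; there is $a'$ with $|a'|>0$ and $-B(0,|a'|)\subset B(0,|a|)$. *)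

(* Defs.v *)
From mathcomp Require Import all_boot all_order all_algebra.
Set Implicit Arguments. Unset Strict Implicit. Unset Printing Implicit Defensive.
Import GRing.Theory.
Local Open Scope ring_scope.

Definition lt_of (R : Type) (le : R -> R -> Prop) (x y : R) : Prop :=
  le x y /\ x <> y.

Definition is_halo (R : comPzSemiRingType) (le : R -> R -> Prop) : Prop :=
  [/\ (forall x, le x x),
      (forall x y, le x y -> le y x -> x = y),
      (forall x y z, le x y -> le y z -> le x z),
      (forall x y z, le x y -> le (x + z) (y + z)) &
      (forall x y z, le x y -> le (x * z) (y * z))].

Definition is_semifield (R : comPzSemiRingType) : Prop :=
  forall x : R, x <> 0 -> exists y : R, x * y = 1.

Definition is_pos_total_aura (R : comPzSemiRingType) (le : R -> R -> Prop) : Prop :=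
  [/\ is_halo le, is_semifield R,
      (forall x y, le x y \/ le y x) &
      lt_of le 0 1].

Definition tempered_growth (R : comPzSemiRingType) (le : R -> R -> Prop) : Prop :=
  forall (P : {poly nat}) (x : R), P != 0 ->
    (forall n : nat, le (x ^+ n) ((P.[n])%:R)) -> le x 1.

Definition is_gen_seminorm (A : comPzRingType) (R : comPzSemiRingType)
    (le : R -> R -> Prop) (nrm : A -> R) : Prop :=
  [/\ nrm 0 = 0, nrm 1 = 1,
      (forall a b, le (nrm (a + b)) (nrm a + nrm b)) &
      (forall a b, le (nrm (a * b)) (nrm a * nrm b))].

Definition is_multiplicative (A : comPzRingType) (R : comPzSemiRingType)
    (nrm : A -> R) : Prop :=
  forall a b, nrm (a * b) = nrm a * nrm b.

Definition ball_of (A : comPzRingType) (R : comPzSemiRingType)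
    (le : R -> R -> Prop) (nrm : A -> R) (x a : A) : A -> Prop :=
  fun z => lt_of le (nrm (z - x)) (nrm a).

Definition has_tiny_balls (A : comPzRingType) (R : comPzSemiRingType)
    (le : R -> R -> Prop) (nrm : A -> R) : Prop :=
  forall a : A, lt_of le 0 (nrm a) ->
  [/\ (exists a' : A, lt_of le 0 (nrm a') /\
         forall z w, ball_of le nrm 0 a' z -> ball_of le nrm 0 a' w ->
                     ball_of le nrm 0 a (z + w)),
      (forall x : A, exists c : A, lt_of le 0 (nrm c) /\
         forall z, ball_of le nrm 0 c z -> ball_of le nrm 0 a (x * z)),
      (exists a' : A, lt_of le 0 (nrm a') /\
         forall z w, ball_of le nrm 0 a' z -> ball_of le nrm 0 a' w ->
                     ball_of le nrm 0 a (z * w)) &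
      (exists a' : A, lt_of le 0 (nrm a') /\
         forall z, ball_of le nrm 0 a' z -> ball_of le nrm 0 a (- z))].

(* Main.v *)
Require Import Defs.
From mathcomp Require Import all_boot all_order all_algebra.
From Stdlib Require Import Classical.
Import GRing.Theory.
Local Open Scope ring_scope.

Theorem corollary4p8 (K : fieldType) (R : comPzSemiRingType)
    (le : R -> R -> Prop) (nrm : K -> R) :
  is_pos_total_aura le ->
  tempered_growth le ->
  is_gen_seminorm le nrm ->
  is_multiplicative nrm ->
  has_tiny_balls le nrm.
Proof.
move=> [[lerr leanti letr leD leM] Hsf Htot [le01 n01]] Htemp [n0 n1 ntri nsub] Hmul.
have ge0 : forall x, le 0 x.
  by move=> x; have := leM _ _ x le01; rewrite mul0r mul1r.
have ltle : forall x y z, lt_of le x y -> le y z -> lt_of le x z.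
  move=> x y z [h1 h2] h3; split; first exact: letr h1 h3.
  by move=> exz; subst z; apply h2; exact: leanti h1 h3.
have lelt : forall x y z, le x y -> lt_of le y z -> lt_of le x z.
  move=> x y z h1 [h2 h3]; split; first exact: letr h1 h2.
  by move=> exz; subst z; apply h3; exact: leanti h2 h1.
have leD2 : forall x y u v, le x y -> le u v -> le (x+u) (y+v).
  move=> x y u v h1 h2; apply: letr (leD _ _ u h1) _.
  by rewrite ![y + _]addrC; exact: leD.
have ltM : forall x y z, lt_of le x y -> lt_of le 0 z -> lt_of le (x*z) (y*z).
  move=> x y z [h1 h2] [_ hz]; split; first exact: leM.
  move=> e; apply h2; have [w hw] := Hsf z (nesym hz).
  by rewrite -(mulr1 x) -(mulr1 y) -hw !mulrA e.
have nlt : forall x y, ~ lt_of le x y -> le y x.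
  move=> x y h; case: (Htot x y) => // hxy.
  case: (classic (x = y)) => [->|ne]; first exact: lerr.
  by exfalso; apply h; split.
have nz : forall k, k != 0 -> nrm k <> 0.
  move=> k hk e; have := Hmul k k^-1; rewrite mulfV // n1 e mul0r => h.
  by apply n01.
have pos : forall k, k != 0 -> lt_of le 0 (nrm k).
  by move=> k hk; split; [exact: ge0 | exact: nesym (nz k hk)].
have posinv : forall k, lt_of le 0 (nrm k) -> k != 0.
  by move=> k h; apply/eqP => e; subst k; rewrite n0 in h; case: h.
have ninv : forall k, k != 0 -> nrm k * nrm k^-1 = 1.
  by move=> k hk; rewrite -Hmul mulfV.
have nN1 : nrm (-1) = 1.
  have hu : nrm (-1) * nrm (-1) = 1 by rewrite -Hmul mulrNN mulr1 n1.
  case: (Htot (nrm (-1)) 1) => h.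
  - have := leM _ _ (nrm (-1)) h; rewrite hu mul1r => h'; exact: leanti h h'.
  - have := leM _ _ (nrm (-1)) h; rewrite hu mul1r => h'; exact: leanti h' h.
have nN : forall z, nrm (-z) = nrm z by move=> z; rewrite -mulN1r Hmul nN1 mul1r.
have nX : forall k n, nrm (k ^+ n) = nrm k ^+ n.
  by move=> k; elim=> [|n IH]; rewrite ?expr0 ?n1 // !exprS Hmul IH.
have small : forall x, lt_of le 0 x -> lt_of le x 1 ->
    exists n, lt_of le (2 * x ^+ n) 1.
  move=> x [_ x0] [x1 x1n]; apply: NNPP => hn.
  have hall : forall n, le 1 (2 * x ^+ n).
    by move=> n; apply nlt => h; apply hn; exists n.
  have [y hy] := Hsf x (nesym x0).
  have hy1 : le y 1.
    apply: (Htemp (2%:P)); first by rewrite polyC_eq0.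
    move=> n; rewrite hornerC.
    have := leM _ _ (y ^+ n) (hall n).
    by rewrite mul1r -mulrA -exprMn hy expr1n mulr1.
  have := leM _ _ x hy1; rewrite mulrC hy mul1r => h.
  by apply x1n; exact: leanti x1 h.
move=> a ha; have a0 : a != 0 := posinv a ha.
split.
- case: (classic (exists e, e != 0 /\ lt_of le (2 * nrm e) 1)) => [[e [e0 he]]|hno].
  + exists (e * a); split; first by apply pos; rewrite mulf_neq0.
    move=> z w; rewrite /ball_of !subr0 => hz hw.
    eapply lelt; first exact: (ntri z w); eapply lelt; first exact: (leD2 _ _ _ _ hz.1 hw.1).
    have -> : nrm (e * a) + nrm (e * a) = (2 * nrm e) * nrm a.
      by rewrite Hmul -mulrA mulr_natl mulr2n.
    by have := ltM _ _ (nrm a) he ha; rewrite mul1r.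
  + exists a; split => //.
    have zero : forall z, lt_of le (nrm z) (nrm a) -> z = 0.
      move=> z hz; case: (eqVneq z 0) => // hz0; exfalso.
      have d0 : z / a != 0 by rewrite mulf_neq0 // invr_neq0.
      have hd1 : lt_of le (nrm (z / a)) 1.
        have := ltM _ _ (nrm a^-1) hz (pos _ (invr_neq0 a0)).
        by rewrite ninv // Hmul.
      have [n hn] := small _ (pos _ d0) hd1.
      apply hno; exists ((z / a) ^+ n); split; first by rewrite expf_neq0.
      by rewrite nX.
    move=> z w; rewrite /ball_of !subr0 => hz hw.
    by rewrite (zero z hz) (zero w hw) addr0 n0.
- move=> x; case: (eqVneq x 0) => [->|x0].
    by exists a; split => // z _; rewrite /ball_of mul0r subr0 n0.
  exists (a / x); split; first by apply pos; rewrite mulf_neq0 // invr_neq0.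
  move=> z; rewrite /ball_of !subr0 => hz.
  have := ltM _ _ (nrm x) hz (pos x x0).
  by rewrite Hmul -mulrA [nrm x^-1 * _]mulrC ninv // mulr1 Hmul mulrC.
- case: (Htot (nrm a) 1) => h.
  + exists a; split => // z w; rewrite /ball_of !subr0 => hz hw.
    rewrite Hmul; apply: lelt (leM _ _ (nrm w) hz.1) _.
    have := ltM _ _ (nrm a) hw ha; rewrite mulrC => h2.
    eapply ltle; first exact: h2; have := leM _ _ (nrm a) h; by rewrite mul1r.
  + exists 1; split; first by rewrite n1; split.
    move=> z w; rewrite /ball_of !subr0 n1 => hz hw.
    rewrite Hmul; apply: lelt (leM _ _ (nrm w) hz.1) _.
    by rewrite mul1r; exact: ltle hw h.
- exists a; split => // z; by rewrite /ball_of !subr0 nN.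
Qed.
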